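(* As $n\to\infty$, $$\log(n)\sum_{(a,b)\in\mathcal{A}_n}|r_n(a,b)|\longrightarrow 0.$$
   Context: $\mathcal{A}_n=\{(a,b)\in\mathbb{N}^2: a\ge b\ge1,\ a+b\le n+1\}$, $x^{\underline{2}}=x(x-1)$, and $r_n(a,b)=\dfrac{(-1)^{n+a-b}(n+1)(2a-2b+1)(a-1)!(2b-2)!(n-a-b+2)!}{2^{n-a+b-1}\,n!\,(b-1)!\,(n+a-b+2)^{\underline{2}}\,(n-a+b+1)^{\underline{2}}}$. *)

(* Defs.v *)
From Stdlib Require Import Reals List Arith.
Import ListNotations.
Open Scope R_scope.

Definition fall2 (x : R) : R := x * (x - 1).

(* A_n = {(a,b) in N^2 : a >= b >= 1, a + b <= n+1}, as an explicit list
   (each pair appears exactly once). *)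
Definition A_set (n : nat) : list (nat * nat) :=
  flat_map (fun a => map (fun b => (a, b))
                         (filter (fun b => Nat.leb (a + b) (n + 1)) (seq 1 a)))
           (seq 1 n).

(* r_n(a,b); for (a,b) in A_n all nat subtractions below are exact. *)
Definition r_n (n a b : nat) : R :=
  (-1) ^ (n + a - b) * INR (n + 1) * INR (2 * a - 2 * b + 1)
  * INR (fact (a - 1)) * INR (fact (2 * b - 2)) * INR (fact (n + 2 - a - b))
  / (2 ^ (n + b - a - 1) * INR (fact n) * INR (fact (b - 1))
     * fall2 (INR (n + a - b + 2)) * fall2 (INR (n + b + 1 - a))).

Definition sum_abs_r (n : nat) : R :=
  fold_right (fun p acc => Rabs (r_n n (fst p) (snd p)) + acc) 0 (A_set n).

(* Main.v *)
Require Import Defs.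
From Stdlib Require Import Reals List Arith Lia Lra.
Open Scope R_scope.
Open Scope nat_scope.
Lemma L1 : forall X Y, fact (S X) * fact (S Y) <= fact (S X + Y).
Proof.
  induction X as [|X IH]; intros Y.
  - change (fact 1) with 1. change (S 0 + Y) with (S Y). lia.
  - change (fact (S (S X))) with (S (S X) * fact (S X)).
    change (S (S X) + Y) with (S (S X + Y)).
    change (fact (S (S X + Y))) with (S (S X + Y) * fact (S X + Y)).
    specialize (IH Y). nia.
Qed.
Lemma L2 : forall q, fact (2*q) <= 2^(2*q) * fact q * fact q.
Proof.
  induction q as [|q IH]. simpl; lia.
  replace (2 * S q) with (S (S (2*q))) by lia.
  change (fact (S (S (2*q)))) with (S (S (2*q)) * (S (2*q) * fact (2*q))).
  change (fact (S q)) with (S q * fact q).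
  change (2 ^ S (S (2*q))) with (2 * (2 * 2^(2*q))).
  nia.
Qed.
Lemma pow_lin : forall r, r + 1 <= 2^(r+1).
Proof. induction r. simpl; lia. replace (S r + 1) with (S (r+1)) by lia. simpl. lia. Qed.
Lemma L3 : forall p r, fact p * fact (r+1) * (p+r+1) <= 2 * 2^r * fact (p+r+1).
Proof.
  intros [|p] r.
  - simpl (fact 0). replace (0+r+1) with (r+1) by lia.
    pose proof (pow_lin r). replace (2^(r+1)) with (2*2^r) in H by (rewrite Nat.pow_add_r; simpl; lia). nia.
  - pose proof (L1 p r). replace (r+1) with (S r) by lia.
    replace (S p + r + S 0) with (S (S p + r)) by lia.
    change (fact (S (S p + r))) with (S (S p + r) * fact (S p + r)).
    assert (1 <= 2^r) by (apply Nat.le_succ_l; apply Nat.neq_0_lt_0; apply Nat.pow_nonzero; lia).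
    replace (S p + r + 1) with (S (S p + r)) by lia.
    set (K := S (S p + r)). set (A := fact (S p) * fact (S r)) in *. set (B := fact (S p + r)) in *. set (C := 2^r) in *.
    clearbody K A B C.
    apply Nat.le_trans with (B * K). apply Nat.mul_le_mono_r; exact H.
    replace (2*C*(K*B)) with ((2*C)*(B*K)) by ring.
    apply Nat.le_trans with (1*(B*K)). lia. apply Nat.mul_le_mono_r. lia.
Qed.
Lemma pow_pos1 : forall r, 1 <= 2^r.
Proof. intro r; apply Nat.le_succ_l; apply Nat.neq_0_lt_0; apply Nat.pow_nonzero; lia. Qed.

Lemma NB1 : forall k r, let n := k+r+1 in
  (n+1)*(2*k+1)*fact k*fact(r+1) * n <= 4*(2^r*fact n*(n+k+2)*(n+k+1)).
Proof.
  intros k r n.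
  assert (H1 : (n+1)*(2*k+1) <= 2*((n+k+2)*(n+k+1))) by (unfold n; nia).
  pose proof (L3 k r) as H2. fold n in H2.
  set (X := (n+k+2)*(n+k+1)) in *. set (F := fact k * fact (r+1)) in *.
  replace ((n+1)*(2*k+1)*fact k*fact(r+1)*n) with (((n+1)*(2*k+1)) * (F*n)) by (unfold F; ring).
  replace (4*(2^r*fact n*(n+k+2)*(n+k+1))) with ((2*X)*(2*2^r*fact n)) by (unfold X; ring).
  apply Nat.mul_le_mono; assumption.
Qed.

Lemma NB2 : forall q k r, let n := 2*(S q)+k+r+1 in
  fact (S q + k) * fact (2*S q) * fact (r+1) * (n*(n+1)) <= 2 * 2^(2*S q + r) * fact n * fact (S q).
Proof.
  intros q k r n.
  pose proof (L2 (S q)) as H2.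
  pose proof (L1 (q+k) r) as H3.
  pose proof (L1 q (q+k+r)) as H4.
  replace (S (q+k) + r) with (S q + k + r) in H3 by lia.
  replace (S q + (q+k+r)) with (S q + k + r + q) in H4 by lia.
  assert (En : n = S (S (S q + k + r + q))) by (unfold n; lia).
  assert (Ef : fact n = n * (S (S q + k + r + q)) * fact (S q + k + r + q)).
  { rewrite En. generalize (S q + k + r + q). intro X. change (fact (S (S X))) with (S (S X) * (S X * fact X)). ring. }
  rewrite Ef. rewrite Nat.pow_add_r.
  replace (r+1) with (S r) by lia.
  assert (Hr := pow_pos1 r).
  assert (HB : n + 1 <= 2 * 2^r * S (S q + k + r + q)) by (unfold n; nia).
  change (fact (S (q+k))) with (fact (S q + k)) in H3.
  change (fact (S (q+k+r))) with (fact (S q + k + r)) in H4.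
  set (G := fact (S q + k + r + q)) in *.
  set (T := S (S q + k + r + q)) in *.
  set (Fq := fact (S q)) in *. set (P := 2^(2*S q)) in *.
  set (A := fact (S q + k)) in *. set (B := fact (S r)) in *.
  clearbody G T Fq P A B. clear Ef En.
  apply Nat.le_trans with (A * (P*Fq*Fq) * B * (n*(n+1))).
  { repeat apply Nat.mul_le_mono_r. apply Nat.mul_le_mono_l. exact H2. }
  assert (HAB : Fq * (A*B) <= G).
  { apply Nat.le_trans with (Fq * fact (S q + k + r)). apply Nat.mul_le_mono_l; exact H3. exact H4. }
  replace (A * (P*Fq*Fq) * B * (n*(n+1))) with ((P*Fq) * (Fq*(A*B)) * (n*(n+1))) by ring.
  apply Nat.le_trans with ((P*Fq) * G * (n * (2*2^r*T))). 2:{ apply Nat.eq_le_incl; ring. }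
  apply Nat.mul_le_mono. apply Nat.mul_le_mono_l. exact HAB. apply Nat.mul_le_mono_l. exact HB.
Qed.

Open Scope R_scope.

Definition G (n a b : nat) : R :=
  if Nat.eqb b 1 then 4 / INR (n * ((n+b-a)*(n+b-a+1)))
  else 4 / INR (n*(n+1)*((n+b-a)*(n+b-a+1))).

Lemma fall2S : forall y, fall2 (INR (S y)) = INR (S y) * INR y.
Proof. intro y. unfold fall2. rewrite S_INR. ring. Qed.

Lemma rn_formula : forall q k r, let n := (2*q+k+r+1)%nat in
  r_n n (q+k+1) (q+1) = (-1)^(n + (q+k+1) - (q+1)) *
   (INR ((n+1)*(2*k+1)*fact(q+k)*fact(2*q)*fact(r+1)) /
    INR (2^(2*q+r)*fact n*fact q*(S(n+k+1)*(n+k+1))*(S(2*q+r+1)*(2*q+r+1)))).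
Proof.
  intros q k r n. unfold r_n.
  replace (2 * (q+k+1) - 2*(q+1) + 1)%nat with (2*k+1)%nat by lia.
  replace (q+k+1-1)%nat with (q+k)%nat by lia.
  replace (2*(q+1)-2)%nat with (2*q)%nat by lia.
  replace (n+2-(q+k+1)-(q+1))%nat with (r+1)%nat by (unfold n; lia).
  replace (n+(q+1)-(q+k+1)-1)%nat with (2*q+r)%nat by (unfold n; lia).
  replace (q+1-1)%nat with q by lia.
  replace (n+(q+k+1)-(q+1)+2)%nat with (S (n+k+1)) by (unfold n; lia).
  replace (n+(q+1)+1-(q+k+1))%nat with (S (2*q+r+1)) by (unfold n; lia).
  rewrite !fall2S. rewrite !mult_INR. rewrite pow_INR.
  replace (INR 2) with 2 by (simpl; ring). field. repeat split; try apply INR_fact_neq_0; try (apply not_0_INR; lia).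
  apply pow_nonzero. simpl. lra.
Qed.

Lemma div_le : forall A B C D, 0 < B -> 0 < D -> A*D <= C*B -> A/B <= C/D.
Proof.
  intros A B C D HB HD H. apply (Rmult_le_reg_r (B*D)). nra.
  replace (A/B*(B*D)) with (A*D) by (field; lra).
  replace (C/D*(B*D)) with (C*B) by (field; lra). exact H.
Qed.

Lemma term_bound : forall q k r,
  Rabs (r_n (2*q+k+r+1) (q+k+1) (q+1)) <= G (2*q+k+r+1) (q+k+1) (q+1).
Proof.
  intros q k r. rewrite rn_formula.
  cbv zeta. remember (2*q+k+r+1)%nat as n eqn:En.
  rewrite Rabs_mult, pow_1_abs, Rmult_1_l.
  rewrite Rabs_pos_eq. 2:{ apply Rle_mult_inv_pos. apply pos_INR. apply lt_0_INR.
     pose proof (lt_O_fact n); pose proof (lt_O_fact q); pose proof (Nat.pow_nonzero 2 (2*q+r)). nia. }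
  unfold G. replace (n + (q+1) - (q+k+1))%nat with (2*q+r+1)%nat by lia.
  assert (Hn : (1 <= n)%nat) by lia.
  destruct q as [|q].
  - replace (Nat.eqb (0+1) 1) with true by reflexivity. cbv iota.
    apply div_le.
    + apply lt_0_INR. repeat apply Nat.mul_pos_pos; try apply lt_O_fact; try lia. apply Nat.neq_0_lt_0, Nat.pow_nonzero; lia.
    + apply lt_0_INR. repeat apply Nat.mul_pos_pos; lia.
    + rewrite <- mult_INR. replace 4 with (INR 4) by (simpl; ring). rewrite <- mult_INR. apply le_INR.
      change (0+k)%nat with k in *. change (2*0)%nat with 0%nat in *. change (fact 0) with 1%nat.
      change (0+r)%nat with r in *. subst n.
      pose proof (NB1 k r) as H. cbv zeta in H. rewrite !Nat.add_0_l.
      apply Nat.le_trans with (((k + r + 1 + 1) * (2 * k + 1) * fact k * fact (r + 1) * (k + r + 1)) * ((r+1)*(r+1+1)))%nat.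
      { apply Nat.eq_le_incl. ring. }
      apply Nat.le_trans with ((4 * (2 ^ r * fact (k + r + 1) * (k + r + 1 + k + 2) * (k + r + 1 + k + 1))) * ((r+1)*(r+1+1)))%nat.
      { apply Nat.mul_le_mono_r. exact H. }
      apply Nat.eq_le_incl. ring.
  - rewrite (proj2 (Nat.eqb_neq (S q + 1) 1)) by lia. cbv iota.
    apply div_le.
    + apply lt_0_INR. repeat apply Nat.mul_pos_pos; try apply lt_O_fact; try lia. apply Nat.neq_0_lt_0, Nat.pow_nonzero; lia.
    + apply lt_0_INR. repeat apply Nat.mul_pos_pos; lia.
    + rewrite <- mult_INR. replace 4 with (INR 4) by (simpl; ring). rewrite <- mult_INR. apply le_INR.
      pose proof (NB2 q k r) as H2. cbv zeta in H2. rewrite <- En in H2.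
      assert (H1 : ((n+1)*(2*k+1) <= 2*(S (n+k+1)*(n+k+1)))%nat) by nia.
      set (W := ((2 * S q + r + 1) * (2 * S q + r + 1 + 1))%nat).
      set (A := (fact (S q + k) * fact (2 * S q) * fact (r + 1))%nat) in *.
      set (P := (2 ^ (2 * S q + r))%nat) in *. set (X := (S (n + k + 1) * (n + k + 1))%nat) in *.
      apply Nat.le_trans with (((n+1)*(2*k+1)) * (A * (n*(n+1))) * W)%nat.
      { apply Nat.eq_le_incl. unfold A. ring. }
      apply Nat.le_trans with ((2*X) * (2*P*fact n*fact (S q)) * W)%nat.
      { apply Nat.mul_le_mono_r. apply Nat.mul_le_mono; assumption. }
      apply Nat.eq_le_incl. unfold W. ring.
Qed.

Open Scope R_scope.
Definition fsum {A} (f : A -> R) (l : list A) : R := fold_right (fun x acc => f x + acc) 0 l.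

Lemma fsum_le {A} (f g : A -> R) l : (forall x, In x l -> f x <= g x) -> fsum f l <= fsum g l.
Proof. induction l; simpl; intros H. lra. apply Rplus_le_compat; auto. Qed.
Lemma fsum_nonneg {A} (f : A -> R) l : (forall x, In x l -> 0 <= f x) -> 0 <= fsum f l.
Proof. induction l; simpl; intros H. lra. apply Rplus_le_le_0_compat; auto. Qed.
Lemma fsum_app {A} (f : A -> R) l1 l2 : fsum f (l1 ++ l2) = fsum f l1 + fsum f l2.
Proof. induction l1; simpl. ring. rewrite IHl1. ring. Qed.
Lemma fsum_flat_map {A B} (f : B -> R) (h : A -> list B) l :
  fsum f (flat_map h l) = fsum (fun a => fsum f (h a)) l.
Proof. induction l; simpl. auto. rewrite fsum_app, IHl. auto. Qed.
Lemma fsum_map {A B} (f : B -> R) (h : A -> B) l : fsum f (map h l) = fsum (fun x => f (h x)) l.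
Proof. induction l; simpl; auto. rewrite IHl; auto. Qed.
Lemma fsum_filter_le {A} (f : A -> R) P l : (forall x, In x l -> 0 <= f x) -> fsum f (filter P l) <= fsum f l.
Proof. induction l; simpl; intros H. lra. destruct (P a); simpl.
  apply Rplus_le_compat_l; auto. pose proof (H a (or_introl eq_refl)). pose proof (IHl (fun x Hx => H x (or_intror Hx))). lra. Qed.
Lemma fsum_plus {A} (f g : A -> R) l : fsum (fun x => f x + g x) l = fsum f l + fsum g l.
Proof. induction l; simpl. ring. rewrite IHl. ring. Qed.
Lemma fsum_scale {A} (f : A -> R) c l : fsum (fun x => c * f x) l = c * fsum f l.
Proof. induction l; simpl. ring. rewrite IHl. ring. Qed.
Lemma fsum_const {A} c (l : list A) : fsum (fun _ => c) l = INR (length l) * c.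
Proof. induction l; simpl length. simpl; ring. simpl fsum. rewrite IHl. rewrite S_INR. ring. Qed.

Lemma tele_up : forall len s c, (1 <= c + s)%nat ->
  fsum (fun b => 1/(INR (c+b) * INR (c+b+1))) (seq s len) = 1/INR (c+s) - 1/INR (c+s+len).
Proof.
  induction len; intros s c H; simpl. rewrite Nat.add_0_r. ring.
  rewrite (IHlen (S s) c) by lia. replace (c + S s)%nat with (c+s+1)%nat by lia.
  replace (c+s+1+len)%nat with (c+s+S len)%nat by lia.
  assert (0 < INR (c+s)) by (apply lt_0_INR; lia).
  rewrite (plus_INR (c+s) 1). simpl (INR 1). field; repeat split; try lra; try (apply not_0_INR; lia).
Qed.

Lemma tele_down : forall len s K, (s + len <= K)%nat ->
  fsum (fun a => 1/(INR (K-a) * INR (K-a+1))) (seq s len) = 1/INR (K-s-len+1) - 1/INR (K-s+1).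
Proof.
  induction len; intros s K H; simpl. rewrite Nat.sub_0_r. ring.
  rewrite (IHlen (S s) K) by lia.
  replace (K - S s - len + 1)%nat with (K - s - S len + 1)%nat by lia.
  replace (K - S s + 1)%nat with (K - s)%nat by lia.
  assert (0 < INR (K-s)) by (apply lt_0_INR; lia).
  rewrite (plus_INR (K-s) 1). simpl (INR 1). field; repeat split; try lra; try (apply not_0_INR; lia).
Qed.

Lemma step1 n : sum_abs_r n <= fsum (fun p => G n (fst p) (snd p)) (A_set n).
Proof.
  change (sum_abs_r n) with (fsum (fun p => Rabs (r_n n (fst p) (snd p))) (A_set n)).
  apply fsum_le. intros [a b] Hin. unfold A_set in Hin.
  apply in_flat_map in Hin as [a' [Ha' Hm]]. apply in_map_iff in Hm as [b' [Heq Hb']].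
  inversion Heq; subst. apply filter_In in Hb' as [Hb1 Hb2].
  apply in_seq in Ha'. apply in_seq in Hb1. apply Nat.leb_le in Hb2. simpl fst; simpl snd.
  pose proof (term_bound (b-1) (a-b) (n+1-a-b)) as H.
  replace (2*(b-1)+(a-b)+(n+1-a-b)+1)%nat with n in H by lia.
  replace (b-1+(a-b)+1)%nat with a in H by lia.
  replace (b-1+1)%nat with b in H by lia. exact H.
Qed.

Lemma inner_bound n a : (1 <= a <= n)%nat ->
  fsum (fun p => G n (fst p) (snd p))
    (map (fun b => (a, b)) (filter (fun b => Nat.leb (a + b) (n + 1)) (seq 1 a)))
  <= 4 / INR n * (1 / (INR (n+1-a) * INR (n+1-a+1))) + 4 / (INR n * INR (n+1)).
Proof.
  intros Ha. rewrite fsum_map. simpl fst; simpl snd.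
  assert (Hn : 0 < INR n) by (apply lt_0_INR; lia).
  eapply Rle_trans. apply fsum_filter_le.
  { intros b Hb. apply in_seq in Hb. unfold G. destruct (Nat.eqb b 1);
    apply Rlt_le; apply Rdiv_lt_0_compat; try lra; apply lt_0_INR;
    repeat apply Nat.mul_pos_pos; lia. }
  destruct a as [|a']; [lia|]. simpl seq. simpl fsum.
  apply Rplus_le_compat.
  - unfold G. replace (Nat.eqb 1 1) with true by reflexivity.
    replace (n + 1 - S a')%nat with (n - a')%nat by lia.
    replace (n+1 - S a' + 1)%nat with (n - a' + 1)%nat by lia.
    rewrite !mult_INR. right. field.
    repeat split; try lra; apply not_0_INR; lia.
  - apply Rle_trans with (fsum (fun b => 4/(INR n * INR (n+1)) * (1/(INR ((n - S a') + b) * INR ((n - S a') + b + 1)))) (seq 2 a')).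
    + apply fsum_le. intros b Hb. apply in_seq in Hb. unfold G.
      rewrite (proj2 (Nat.eqb_neq b 1)) by lia.
      replace (n + b - S a')%nat with (n - S a' + b)%nat by lia.
      rewrite !mult_INR. right. field.
      repeat split; try lra; apply not_0_INR; lia.
    + rewrite fsum_scale. rewrite tele_up by lia.
      assert (Hp : 0 < INR (n+1)) by (apply lt_0_INR; lia).
      assert (H1 : 1 / INR (n - S a' + 2) <= 1).
      { assert (1 <= INR (n - S a' + 2)) by (apply (le_INR 1); lia).
        unfold Rdiv. rewrite Rmult_1_l. rewrite <- Rinv_1. apply Rinv_le_contravar; lra. }
      assert (H2 : 0 <= 1 / INR (n - S a' + 2 + a')).
      { apply Rlt_le, Rdiv_lt_0_compat. lra. apply lt_0_INR; lia. }
      assert (H3 : 0 < 4 / (INR n * INR (n+1))) by (apply Rdiv_lt_0_compat; [lra| nra]).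
      rewrite <- (Rmult_1_r (4 / (INR n * INR (n+1)))) at 2.
      apply Rmult_le_compat_l; lra.
Qed.

Lemma sum_bound n : (1 <= n)%nat -> sum_abs_r n <= 8 / INR n.
Proof.
  intros Hn1. eapply Rle_trans. apply step1.
  assert (Hn : 0 < INR n) by (apply lt_0_INR; lia).
  assert (Hp : 0 < INR (n+1)) by (apply lt_0_INR; lia).
  unfold A_set. rewrite fsum_flat_map.
  eapply Rle_trans.
  { apply fsum_le. intros a Ha. apply in_seq in Ha. apply inner_bound. lia. }
  rewrite fsum_plus, fsum_scale, fsum_const, length_seq.
  rewrite (tele_down n 1 (n+1)) by lia.
  replace (n + 1 - 1 - n + 1)%nat with 1%nat by lia. simpl (INR 1).
  assert (H2 : 0 <= 1 / INR (n+1-1+1)) by (apply Rlt_le, Rdiv_lt_0_compat; [lra| apply lt_0_INR; lia]).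
  assert (H4 : 0 < 4 / INR n) by (apply Rdiv_lt_0_compat; lra).
  assert (E : INR n * (4 / (INR n * INR (n+1))) = 4 / INR (n+1)) by (field; lra).
  rewrite E.
  assert (H5 : 4 / INR (n+1) <= 4 / INR n).
  { apply Rmult_le_compat_l. lra. apply Rinv_le_contravar. lra. rewrite plus_INR; simpl; lra. }
  assert (H6 : 4 / INR n * (1 / 1 - 1 / INR (n + 1 - 1 + 1)) <= 4 / INR n).
  { rewrite <- (Rmult_1_r (4 / INR n)) at 2. apply Rmult_le_compat_l; lra. }
  replace (8 / INR n) with (4 / INR n + 4 / INR n) by (field; lra). lra.
Qed.

Lemma ln_le_sqrt x : 0 < x -> ln x <= 2 * sqrt x.
Proof.
  intros Hx. assert (Hs : 0 < sqrt x) by (apply sqrt_lt_R0; lra).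
  rewrite <- (sqrt_sqrt x) at 1 by lra. rewrite ln_mult by lra.
  pose proof (exp_ineq1_le (ln (sqrt x))). rewrite exp_ln in H by lra. lra.
Qed.

Theorem mainTheorem18 :
  Un_cv (fun n : nat => ln (INR n) * sum_abs_r n) 0.
Proof.
  intros eps Heps.
  destruct (INR_unbounded ((16/eps)^2)) as [N HN].
  exists (S N). intros n Hn. unfold R_dist. rewrite Rminus_0_r.
  assert (Hn1 : (1 <= n)%nat) by lia.
  assert (Hnp : 0 < INR n) by (apply lt_0_INR; lia).
  assert (HNn : INR N <= INR n) by (apply le_INR; lia).
  assert (Hln : 0 <= ln (INR n)).
  { destruct (Req_dec (INR n) 1) as [E|E]. rewrite E, ln_1; lra.
    rewrite <- ln_1. left. apply ln_increasing. lra. assert (1 <= INR n) by (apply (le_INR 1); lia). lra. }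
  assert (Hs0 : 0 <= sum_abs_r n).
  { unfold sum_abs_r. change (fold_right _ 0 (A_set n)) with (fsum (fun p => Rabs (r_n n (fst p) (snd p))) (A_set n)).
    apply fsum_nonneg. intros; apply Rabs_pos. }
  rewrite Rabs_pos_eq by (apply Rmult_le_pos; lra).
  pose proof (sum_bound n Hn1) as Hsb. pose proof (ln_le_sqrt (INR n) Hnp) as Hl.
  assert (Hsq : 0 < sqrt (INR n)) by (apply sqrt_lt_R0; lra).
  assert (Hss : sqrt (INR n) * sqrt (INR n) = INR n) by (apply sqrt_sqrt; lra).
  assert (Hbig : 16/eps < sqrt (INR n)).
  { rewrite <- (sqrt_pow2 (16/eps)) by (apply Rlt_le, Rdiv_lt_0_compat; lra).
    apply sqrt_lt_1. apply pow2_ge_0. lra. lra. }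
  apply Rle_lt_trans with (2 * sqrt (INR n) * (8 / INR n)).
  { apply Rmult_le_compat; lra. }
  replace (2 * sqrt (INR n) * (8 / INR n)) with (16 / sqrt (INR n)).
  2:{ set (s := sqrt (INR n)) in *. rewrite <- Hss. field; lra. }
  apply (Rmult_lt_reg_r (sqrt (INR n) / eps)). apply Rdiv_lt_0_compat; lra.
  replace (16 / sqrt (INR n) * (sqrt (INR n) / eps)) with (16/eps) by (field; lra).
  replace (eps * (sqrt (INR n) / eps)) with (sqrt (INR n)) by (field; lra). exact Hbig.
Qed.
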